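(* Let $K$ be a field, $P=K[x_1,\dots,x_n]$, $g_1,\dots,g_r\in P\setminus\{0\}$ such that $I=\langle g_1,\dots,g_r\rangle$ is a proper ideal, and let $Z=(z_1,\dots,z_s)$ be a tuple of distinct indeterminates among $x_1,\dots,x_n$. The procedure $\mathrm{OPTCHECK}$ applied to $(g_1,\dots,g_r)$ and $Z$ terminates and returns either ``Fail'' or a tuple $W\in\mathbb{N}^n$. If it returns a tuple $W$, then there exists a $Z$-separating tuple $(f_1,\dots,f_s)$ of polynomials in $I$ such that every term ordering $\sigma$ compatible with the grading given by $W$ satisfies $\operatorname{LT}_\sigma(f_i)=z_i$ for $i=1,\dots,s$.
   Context: $\operatorname{Supp}(f)$ is the set of terms occurring in $f$; $\operatorname{Lin}(f)$ is the homogeneous degree-1 component of $f$; $\langle\cdot\rangle_K$ denotes $K$-linear span; $P_{\le\delta}$ is the set of polynomials of degree $\le\delta$. A tuple $(f_1,\dots,f_s)$ of polynomials in an ideal $I$ is $Z$-separating if there is a term ordering $\sigma$ with $\operatorname{LT}_\sigma(f_i)=z_i$ for all $i$. For $W\in\mathbb{N}^n$ the $W$-degree of $x_1^{a_1}\cdots x_n^{a_n}$ is $\sum w_ia_i$; a term ordering $\sigma$ is compatible with the grading given by $W$ if $t>_\sigma t'$ whenever the $W$-degree of $t$ exceeds that of $t'$. Procedure $\mathrm{LI}$ (linear interreduction), applied to a tuple $Z=(z_1,\dots,z_s)$ of distinct indeterminates and polynomials $g_1,\dots,g_r$: let $t_1>\dots>t_m$ (lexicographic order, $x_1>\dots>x_n$)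 be the terms of $\bigcup_j\operatorname{Supp}(g_j)$ other than $z_1,\dots,z_s$; form the coefficient matrix $M$ of $g_1,\dots,g_r$ w.r.t. column order $(z_1,\dots,z_s,t_1,\dots,t_m)$; output the polynomials whose coefficient vectors are the nonzero rows of the reduced row echelon form of $M$, in order. Procedure $\mathrm{OPTCHECK}$ on input $(g_1,\dots,g_r)$ and $Z$: (1) set $w_1=\dots=w_n=0$, $\delta=\max_j\deg(g_j)$, $d=1$. (2) In each $g_j$ delete every monomial not divisible by some indeterminate of $Z$. (3) If $\dim_K\langle\operatorname{Lin}(g_1),\dots,\operatorname{Lin}(g_r)\rangle_K<\#Z$, return ``Fail''. (4) Repeat: (i) form $H=\{x_ig_j : x_i\text{ an indeterminate not in the current }Z,\ j=1,\dots,r\}$ from the current list; fix a degree-compatible term ordering $\tau$ and compute a $K$-basis $h_1,\dots,h_m$ of $\langle H\rangle_K$ with pairwise distinct $\tau$-leading terms; let $q_1,\dots,q_u$ be those $h_k$ lying in $P_{\le\delta}$; replace the current list by the output of $\mathrm{LI}$ applied to the current $Z$ and $(g_1,\dots,g_r,q_1,\dots,q_u)$; (ii) let $\widetilde Z$ be the set of indeterminates of the current $Z$ that occur as elements of the current list; (iii) if $\widetilde Z=\emptyset$, return ``Fail''; (iv) for each $z\in\widetilde Z$, say $z=x_k$, set $w_k=d$ and remove $z$ from $Z$; (v) in each current $g_j$ delete every monomial not divisible by some indeterminate of the (updated) $Z$; (vi) replace $d$ by $2\delta d+1$; until $Z$ is empty. (5) Return $W=(w_1,\dots,w_n)$. 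*)

(* Defs.v *)
From mathcomp Require Import all_boot all_order all_algebra.
From mathcomp Require Export mpoly.
From Stdlib Require Export Relations.

Set Implicit Arguments.
Unset Strict Implicit.
Unset Printing Implicit Defensive.

Import GRing.Theory.
Local Open Scope ring_scope.

Section OptCheck.

Variables (K : fieldType) (n : nat).

Notation mon := 'X_{1..n}.
Notation poly := {mpoly K[n]}.

Definition term_ordering (lt : rel mon) : Prop :=
  [/\ forall t, ~~ lt t t,
      forall t1 t2 t3, lt t1 t2 -> lt t2 t3 -> lt t1 t3,
      forall t t', t != t' -> lt t t' || lt t' t,
      forall t t' u, lt t t' -> lt (t + u)%MM (t' + u)%MM
    & forall t, t != 0%MM -> lt 0%MM t].

Definition is_LT (lt : rel mon) (f : poly) (t : mon) : Prop :=
  t \in msupp f /\ forall t', t' \in msupp f -> t' != t -> lt t' t.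

Definition wdeg (W : 'I_n -> nat) (t : mon) : nat := (\sum_(i < n) W i * t i)%N.

Definition W_compatible (W : 'I_n -> nat) (lt : rel mon) : Prop :=
  forall t t', (wdeg W t' < wdeg W t)%N -> lt t' t.

Definition deg_compatible (lt : rel mon) : Prop :=
  forall t t', (mdeg t' < mdeg t)%N -> lt t' t.

(* total degree of a polynomial (deg 0 = 0) *)
Definition pdeg (f : poly) : nat := \max_(m <- msupp f) mdeg m.

Definition in_span (gs : seq poly) (f : poly) : Prop :=
  exists c : 'I_(size gs) -> K, f = \sum_(j < size gs) c j *: gs`_j.

Definition same_span (gs hs : seq poly) : Prop :=
  (forall f, in_span gs f -> in_span hs f) /\ (forall f, in_span hs f -> in_span gs f).

Definition lin_indep (gs : seq poly) : Prop :=
  forall c : 'I_(size gs) -> K,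
    \sum_(j < size gs) c j *: gs`_j = 0 -> forall j, c j = 0.

Definition in_ideal (gs : seq poly) (f : poly) : Prop :=
  exists c : 'I_(size gs) -> poly, f = \sum_(j < size gs) c j * gs`_j.

Definition zterm (Z : seq 'I_n) (i : 'I_(size Z)) : mon := U_(tnth (in_tuple Z) i)%MM.

Definition Z_separating (Z : seq 'I_n) (f : 'I_(size Z) -> poly) : Prop :=
  exists lt, term_ordering lt /\ forall i, is_LT lt (f i) (zterm i).

(* lexicographic order with x_1 > ... > x_n : lexgt t t' iff t >_lex t' *)
Definition lexgt (t t' : mon) : bool :=
  [exists k : 'I_n, [forall i : 'I_n, (i < k)%N ==> (t i == t' i)] && (t' k < t k)%N].

Definition isZterm (Z : seq 'I_n) (t : mon) : bool := has (fun z => t == U_(z)%MM) Z.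
Definition zpos (Z : seq 'I_n) (t : mon) : nat := find (fun z => t == U_(z)%MM) Z.

(* column order (z_1, ..., z_s, t_1, ..., t_m): colbefore Z t t' iff the
   column of t comes strictly before the column of t' *)
Definition colbefore (Z : seq 'I_n) (t t' : mon) : bool :=
  if isZterm Z t then (if isZterm Z t' then (zpos Z t < zpos Z t')%N else true)
  else ~~ isZterm Z t' && lexgt t t'.

Definition is_pivot (Z : seq 'I_n) (f : poly) (t : mon) : Prop :=
  t \in msupp f /\ forall t', t' \in msupp f -> t' != t -> colbefore Z t t'.

(* hs is the sequence of (nonzero) rows of the reduced row echelon form of the
   coefficient matrix of gs, w.r.t. the column order above; i.e. hs is in
   reduced row echelon form and has the same row space as gs. *)
Definition LI (Z : seq 'I_n) (gs hs : seq poly) : Prop :=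
  same_span gs hs /\
  exists piv : seq mon,
    [/\ size piv = size hs,
        forall j, (j < size hs)%N -> hs`_j != 0 /\ is_pivot Z hs`_j (nth 0%MM piv j),
        forall j, (j < size hs)%N -> hs`_j@_(nth 0%MM piv j) = 1,
        forall j k, (j < k < size hs)%N -> colbefore Z (nth 0%MM piv j) (nth 0%MM piv k)
      & forall j k, (j < size hs)%N -> (k < size hs)%N -> j != k ->
                    hs`_k@_(nth 0%MM piv j) = 0].

Definition restrictZ (Z : seq 'I_n) (f : poly) : poly :=
  \sum_(m <- msupp f | has (fun z => (0 < m z)%N) Z) f@_m *: 'X_[m].

(* coefficient matrix of Lin(g_1), ..., Lin(g_r) w.r.t. x_1, ..., x_n;
   its rank is dim_K <Lin(g_1),...,Lin(g_r)>_K *)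
Definition linmx (gs : seq poly) : 'M[K]_(size gs, n) :=
  \matrix_(j < size gs, i < n) gs`_j@_(U_(i)%MM).

Definition Hset (Z : seq 'I_n) (gs : seq poly) : seq poly :=
  [seq 'X_i * g | i <- [seq i <- enum 'I_n | i \notin Z], g <- gs].

Definition LT_basis (lt : rel mon) (H hs : seq poly) : Prop :=
  [/\ all (fun h => h != 0) hs, lin_indep hs, same_span H hs
    & exists lts : seq mon, [/\ size lts = size hs, uniq lts
        & forall j, (j < size hs)%N -> is_LT lt hs`_j (nth 0%MM lts j)]].

(* states of the repeat-loop of step (4): current Z, current list, current
   weights w, current d; or the returned value (None = "Fail"). *)
Inductive ocstate :=
| OCLoop of seq 'I_n & seq poly & ('I_n -> nat) & nat
| OCDone of option ('I_n -> nat).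

(* steps (1)-(3) *)
Definition oc_init (gs : seq poly) (Z : seq 'I_n) : ocstate :=
  let gs0 := map (restrictZ Z) gs in
  if (\rank (linmx gs0) < size Z)%N then OCDone None
  else OCLoop Z gs0 (fun _ => 0%N) 1%N.

(* steps (ii)-(vi) and the "until" test, after the list has become gs' *)
Definition oc_after (delta : nat) (Z : seq 'I_n) (gs' : seq poly)
    (w : 'I_n -> nat) (d : nat) : ocstate :=
  let Zt := [seq z <- Z | 'X_z \in gs'] in
  if Zt == [::] then OCDone None else
  let Z' := [seq z <- Z | z \notin Zt] in
  let w' := fun k => if k \in Zt then d else w k in
  let gs'' := map (restrictZ Z') gs' in
  if Z' == [::] then OCDone (Some w')
  else OCLoop Z' gs'' w' (2 * delta * d + 1)%N.

(* one iteration of the repeat-loop; step (i) is nondeterministic in the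
   choice of the degree-compatible term ordering tau and of the basis hs. *)
Inductive oc_step (delta : nat) : ocstate -> ocstate -> Prop :=
| OCStep Z gs w d (tau : rel mon) hs gs' :
    term_ordering tau -> deg_compatible tau ->
    LT_basis tau (Hset Z gs) hs ->
    LI Z (gs ++ [seq h <- hs | (pdeg h <= delta)%N]) gs' ->
    oc_step delta (OCLoop Z gs w d) (oc_after delta Z gs' w d).

Definition oc_reach (delta : nat) : ocstate -> ocstate -> Prop :=
  clos_refl_trans ocstate (oc_step delta).

End OptCheck.

Arguments OCLoop {K n}.
Arguments OCDone {K n}.

(* Main.v *)
Require Import Defs.
From mathcomp Require Import all_boot all_order all_algebra.
From mathcomp Require Import mpoly.
From Stdlib Require Import Relations.
From mathcomp Require Import zify.
From Stdlib Require Import ClassicalEpsilon.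

Set Implicit Arguments.
Unset Strict Implicit.
Unset Printing Implicit Defensive.

Import GRing.Theory Order.TTheory.
Local Open Scope ring_scope.

Section Span.
Variables (K : fieldType) (n : nat).
Notation mon := 'X_{1..n}.
Notation poly := {mpoly K[n]}.

Lemma span_ind (S : poly -> Prop) (gs : seq poly) :
  S 0 -> (forall a b, S a -> S b -> S (a + b)) ->
  (forall c a, S a -> S (c *: a)) -> (forall x, x \in gs -> S x) ->
  forall f, in_span gs f -> S f.
Proof.
move=> S0 SD SZ Sm f [c ->]; elim/big_ind: _ => // j _.
by apply: SZ; apply: Sm; apply: mem_nth.
Qed.

Lemma span0 (gs : seq poly) : in_span gs 0.
Proof. by exists (fun=> 0); rewrite big1 // => j _; rewrite scale0r. Qed.

Lemma spanD (gs : seq poly) a b : in_span gs a -> in_span gs b -> in_span gs (a + b).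
Proof.
move=> [c1 ->] [c2 ->]; exists (fun j => c1 j + c2 j).
by rewrite -big_split; apply: eq_bigr => j _; rewrite scalerDl.
Qed.

Lemma spanZ (gs : seq poly) c a : in_span gs a -> in_span gs (c *: a).
Proof.
move=> [c1 ->]; exists (fun j => c * c1 j).
by rewrite scaler_sumr; apply: eq_bigr => j _; rewrite scalerA.
Qed.

Lemma spanN (gs : seq poly) a : in_span gs a -> in_span gs (- a).
Proof. by move=> h; rewrite -scaleN1r; apply: spanZ. Qed.

Lemma spanB (gs : seq poly) a b : in_span gs a -> in_span gs b -> in_span gs (a - b).
Proof. by move=> ha hb; apply: spanD => //; apply: spanN. Qed.

Lemma span_mem (gs : seq poly) x : x \in gs -> in_span gs x.
Proof.
move=> xin; have lt : (index x gs < size gs)%N by rewrite index_mem.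
exists (fun j => ((val j == index x gs) : nat)%:R).
rewrite (bigD1 (Ordinal lt)) //= eqxx scale1r nth_index // big1 ?addr0 //.
move=> j /negbTE; rewrite -val_eqE /= => ->; by rewrite scale0r.
Qed.

Lemma span_sum (gs : seq poly) (I : Type) (r : seq I) (F : I -> poly) :
  (forall i, in_span gs (F i)) -> in_span gs (\sum_(i <- r) F i).
Proof. move=> h; elim/big_ind: _ => //; [exact: span0 | exact: spanD]. Qed.

Lemma span_sub (gs hs : seq poly) :
  (forall x, x \in gs -> in_span hs x) -> forall f, in_span gs f -> in_span hs f.
Proof.
move=> h; apply: span_ind => //; [exact: span0|exact: spanD|exact: spanZ].
Qed.

Lemma same_span_mem (gs hs : seq poly) :
  (forall x, x \in gs -> in_span hs x) -> (forall x, x \in hs -> in_span gs x) ->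
  same_span gs hs.
Proof. by move=> h1 h2; split; apply: span_sub. Qed.

Definition supp_in (P : mon -> Prop) (f : poly) := forall m, m \in msupp f -> P m.

Lemma supp_in0 P : supp_in P 0.
Proof. by move=> m; rewrite msupp0. Qed.

Lemma supp_inD P a b : supp_in P a -> supp_in P b -> supp_in P (a + b).
Proof. by move=> ha hb m /msuppD_le; rewrite mem_cat => /orP[/ha|/hb]. Qed.

Lemma supp_inZ P c a : supp_in P a -> supp_in P (c *: a).
Proof. by move=> ha m /msuppZ_le /ha. Qed.

Lemma supp_inN P a : supp_in P a -> supp_in P (- a).
Proof. by move=> h; rewrite -scaleN1r; apply: supp_inZ. Qed.

Lemma supp_inB P a b : supp_in P a -> supp_in P b -> supp_in P (a - b).
Proof. by move=> ha hb; apply: supp_inD => //; apply: supp_inN. Qed.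

Lemma supp_in_imp (P Q : mon -> Prop) a : (forall m, P m -> Q m) -> supp_in P a -> supp_in Q a.
Proof. by move=> h ha m /ha /h. Qed.

Lemma supp_inMX P (i : 'I_n) a : supp_in P a -> supp_in (fun m => exists2 m', P m' & m = (U_(i) + m')%MM) ('X_i * a).
Proof.
move=> ha m; rewrite mulrC (perm_mem (msuppMX _ _)) => /mapP [m' /ha pm ->].
by exists m'.
Qed.

Lemma ideal0 (gs : seq poly) : in_ideal gs 0.
Proof. by exists (fun=> 0); rewrite big1 // => j _; rewrite mul0r. Qed.

Lemma idealD (gs : seq poly) a b : in_ideal gs a -> in_ideal gs b -> in_ideal gs (a + b).
Proof.
move=> [c1 ->] [c2 ->]; exists (fun j => c1 j + c2 j).
by rewrite -big_split; apply: eq_bigr => j _; rewrite mulrDl.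
Qed.

Lemma idealM (gs : seq poly) p a : in_ideal gs a -> in_ideal gs (p * a).
Proof.
move=> [c1 ->]; exists (fun j => p * c1 j).
by rewrite mulr_sumr; apply: eq_bigr => j _; rewrite mulrA.
Qed.

Lemma idealZ (gs : seq poly) c a : in_ideal gs a -> in_ideal gs (c *: a).
Proof. by move=> h; rewrite -mul_mpolyC; apply: idealM. Qed.

Lemma ideal_mem (gs : seq poly) x : x \in gs -> in_ideal gs x.
Proof.
move=> xin; have lt : (index x gs < size gs)%N by rewrite index_mem.
exists (fun j => ((val j == index x gs) : nat)%:R).
rewrite (bigD1 (Ordinal lt)) //= eqxx mul1r nth_index // big1 ?addr0 //.
move=> j /negbTE; rewrite -val_eqE /= => ->; by rewrite mul0r.
Qed.

End Span.
Section Orders.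
Variables (K : fieldType) (n : nat).
Notation mon := 'X_{1..n}.
Notation poly := {mpoly K[n]}.

Definition tau0 : rel mon := fun a b => (a < b)%O.

Lemma tau0_to : @term_ordering n tau0.
Proof.
split.
- by move=> t; rewrite /tau0 ltxx.
- by move=> a b c; apply: lt_trans.
- by move=> t t' /lt_total.
- by move=> t t' u; rewrite /tau0 ltmc_add2l.
- by move=> t t0; rewrite /tau0 lt_neqAle le0m andbT eq_sym.
Qed.

Lemma tau0_deg : @deg_compatible n tau0.
Proof.
by move=> t t' h; apply: lt_mdeg_ltmc.
Qed.

Definition refine (phi : mon -> nat) (tau : rel mon) : rel mon :=
  fun t t' => (phi t < phi t')%N || ((phi t == phi t') && tau t t').

Lemma refine_to (phi : mon -> nat) tau :
  (forall t u, phi (t + u)%MM = (phi t + phi u)%N) ->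
  @term_ordering n tau -> @term_ordering n (refine phi tau).
Proof.
move=> phiD [irr tr tot mul pos]; rewrite /refine; split.
- by move=> t; rewrite ltnn eqxx irr.
- move=> a b c /orP[h1|/andP[/eqP e1 h1]] /orP[h2|/andP[/eqP e2 h2]].
  + by rewrite (ltn_trans h1 h2).
  + by rewrite -e2 h1.
  + by rewrite e1 h2.
  + by rewrite e1 e2 eqxx (tr _ _ _ h1 h2) orbT.
- move=> t t' /tot; case: (ltngtP (phi t) (phi t')) => //=.
- move=> t t' u; rewrite !phiD ltn_add2r eqn_add2r.
  by case/orP=> [->//|/andP[-> /mul ->]]; rewrite orbT.
- have p0 : phi 0%MM = 0%N.
    by have := phiD 0%MM 0%MM; rewrite addm0 => /eqP; rewrite -{1}[phi _]addn0 eqn_add2l => /eqP <-.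
  move=> t /pos ->; rewrite p0 andbT; by case: (phi t).
Qed.

Lemma refine_compat (phi : mon -> nat) tau t t' : (phi t' < phi t)%N -> refine phi tau t' t.
Proof. by rewrite /refine => ->. Qed.

Lemma wdegD (W : 'I_n -> nat) t u : wdeg W (t + u)%MM = (wdeg W t + wdeg W u)%N.
Proof. by rewrite /wdeg -big_split; apply: eq_bigr => i _; rewrite mnmDE mulnDr. Qed.

Lemma W_order_exists (W : 'I_n -> nat) :
  exists lt, @term_ordering n lt /\ W_compatible W lt.
Proof.
exists (refine (wdeg W) tau0); split.
- apply: refine_to; [exact: wdegD | exact: tau0_to].
- by move=> t t' h; apply: refine_compat.
Qed.

Lemma wdeg1 (W : 'I_n -> nat) z : wdeg W U_(z)%MM = W z.
Proof.
rewrite /wdeg (bigD1 z) //= mnm1E eqxx muln1 big1 ?addn0 // => i /negbTE.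
by rewrite mnm1E eq_sym => ->; rewrite muln0.
Qed.

Lemma wdeg_eq (W W' : 'I_n -> nat) (t : mon) :
  (forall k, t k != 0%N -> W k = W' k) -> wdeg W t = wdeg W' t.
Proof.
move=> h; apply: eq_bigr => i _; case: (eqVneq (t i) 0%N) => [->|/h ->];
by rewrite ?muln0.
Qed.

Lemma wdeg_le (W : 'I_n -> nat) D (t : mon) :
  (forall k, (W k <= D)%N) -> (wdeg W t <= D * mdeg t)%N.
Proof.
move=> h; rewrite mdegE big_distrr; apply: leq_sum => i _.
by rewrite leq_mul2r h orbT.
Qed.

Lemma lexgt_irr t : ~~ @lexgt n t t.
Proof. by apply/existsP => -[k /andP[_]]; rewrite ltnn. Qed.

Lemma lexgt_trans a b c : @lexgt n a b -> lexgt b c -> lexgt a c.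
Proof.
move=> /existsP[k1 /andP[/forallP e1 l1]] /existsP[k2 /andP[/forallP e2 l2]].
apply/existsP.
case: (ltngtP k1 k2) => [h|h|/val_inj h].
- exists k1; apply/andP; split.
    apply/forallP => i; apply/implyP => hi.
    rewrite (eqP (implyP (e1 i) hi)) (eqP (implyP (e2 i) (ltn_trans hi h))) //.
  by rewrite -(eqP (implyP (e2 k1) h)).
- exists k2; apply/andP; split.
    apply/forallP => i; apply/implyP => hi.
    rewrite (eqP (implyP (e1 i) (ltn_trans hi h))) (eqP (implyP (e2 i) hi)) //.
  by rewrite (eqP (implyP (e1 k2) h)).
- subst k2; exists k1; apply/andP; split; last exact: ltn_trans l2 l1.
  apply/forallP => i; apply/implyP => hi.
  by rewrite (eqP (implyP (e1 i) hi)) (eqP (implyP (e2 i) hi)).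
Qed.

Lemma lexgt_total t t' : t != t' -> @lexgt n t t' || lexgt t' t.
Proof.
move=> neq.
have [i0 hi0] : exists i, t i != t' i.
  apply/existsP; apply: contraNT neq => /existsPn h; apply/eqP/mnmP => i.
  by apply/eqP; move: (h i); rewrite negbK.
case: (@arg_minnP _ i0 (fun i => t i != t' i) (fun i : 'I_n => i : nat) hi0) => k hk hmin.
have eqb : [forall i : 'I_n, (i < k)%N ==> (t i == t' i)].
  apply/forallP => i; apply/implyP => hi; apply: contraLR hi => /hmin.
  by rewrite -leqNgt.
move: hk; rewrite neq_ltn => /orP[h|h].
- apply/orP; right; apply/existsP; exists k; rewrite h andbT.
  apply/forallP => i; apply/implyP => hi; by rewrite eq_sym (implyP (forallP eqb i)).
- apply/orP; left; apply/existsP; exists k; by rewrite h eqb.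
Qed.

Lemma zpos_inj (Z : seq 'I_n) t t' : isZterm Z t -> isZterm Z t' -> zpos Z t = zpos Z t' -> t = t'.
Proof.
rewrite /isZterm /zpos => h h' e.
case: Z h h' e => [//|z0 Z'] h h' e.
move: (nth_find z0 h) (nth_find z0 h'); rewrite e => /eqP h1 /eqP h2; exact: (etrans h1 (esym h2)).
Qed.

Lemma colbefore_irr Z t : ~~ @colbefore n Z t t.
Proof.
rewrite /colbefore; case: (isZterm Z t) => /=; first by rewrite ltnn.
by rewrite (negbTE (lexgt_irr _)) ?andbF.
Qed.

Lemma colbefore_trans Z a b c : @colbefore n Z a b -> colbefore Z b c -> colbefore Z a c.
Proof.
rewrite /colbefore; case: (isZterm Z a); case: (isZterm Z b); case: (isZterm Z c) => //=.
all: first [exact: ltn_trans | exact: lexgt_trans].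
Qed.

Lemma colbefore_total Z t t' : t != t' -> @colbefore n Z t t' || colbefore Z t' t.
Proof.
move=> neq; rewrite /colbefore.
case ht: (isZterm Z t); case ht': (isZterm Z t') => //=.
- by rewrite -neq_ltn; apply: contra neq => /eqP e; apply/eqP; apply: (zpos_inj ht ht' e).
- exact: (lexgt_total neq).
Qed.

End Orders.
Section RREF.
Variables (K : fieldType) (n : nat).
Notation mon := 'X_{1..n}.
Notation poly := {mpoly K[n]}.
Variable bef : rel mon.
Hypothesis bef_irr : forall t, ~~ bef t t.
Hypothesis bef_trans : forall a b c, bef a b -> bef b c -> bef a c.
Hypothesis bef_tot : forall a b, a != b -> bef a b || bef b a.

Definition ispiv (f : poly) t := t \in msupp f /\ forall t', t' \in msupp f -> t' != t -> bef t t'.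

Definition pinv (s : seq (poly * mon)) :=
  [/\ uniq s, {in s &, forall x y, x.2 = y.2 -> x = y},
      forall x, x \in s -> [/\ x.1 != 0, ispiv x.1 x.2 & x.1@_x.2 = 1]
    & forall x y, x \in s -> y \in s -> x.2 != y.2 -> y.1@_x.2 = 0].

Lemma min_exists (l : seq mon) : l != [::] ->
  exists2 t, t \in l & forall t', t' \in l -> t' != t -> bef t t'.
Proof.
elim: l => [//|a l IH] _.
case: (eqVneq l [::]) => [->|/IH [t tin tmin]].
  exists a; first by rewrite mem_seq1.
  by move=> t'; rewrite mem_seq1 => /eqP ->; rewrite eqxx.
case: (eqVneq a t) => [e|ne].
  exists t; first by rewrite in_cons tin orbT.
  by move=> t'; rewrite in_cons => /orP[/eqP->|/tmin//]; rewrite e eqxx.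
case/orP: (bef_tot ne) => h.
- exists a; first by rewrite in_cons eqxx.
  move=> t'; rewrite in_cons => /orP[/eqP->|t'in]; first by rewrite eqxx.
  move=> _; case: (eqVneq t' t) => [->//|/(tmin _ t'in)]; exact: bef_trans h.
- exists t; first by rewrite in_cons tin orbT.
  by move=> t'; rewrite in_cons => /orP[/eqP->|/tmin//].
Qed.

Lemma coef_sum (I : Type) (r : seq I) (F : I -> poly) m :
  (\sum_(i <- r) F i)@_m = \sum_(i <- r) (F i)@_m.
Proof. by rewrite raddf_sum. Qed.

Lemma span_sum_seq (gs : seq poly) (I : eqType) (r : seq I) (F : I -> poly) :
  (forall i, i \in r -> in_span gs (F i)) -> in_span gs (\sum_(i <- r) F i).
Proof.
move=> h; rewrite big_seq; elim/big_ind: _ => //; [exact: span0 | exact: spanD].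
Qed.

Lemma span_fst (s : seq (poly * mon)) x : x \in s -> in_span (map fst s) x.1.
Proof. by move=> xin; apply: span_mem; apply: map_f. Qed.

Lemma pinv_cons s g : pinv s -> exists s', pinv s' /\
  (forall x, x \in g :: map fst s -> in_span (map fst s') x) /\
  (forall x, x \in map fst s' -> in_span (g :: map fst s) x).
Proof.
move=> [us inj el cross].
set sm := \sum_(x <- s) g@_x.2 *: x.1.
have smcoef : forall y, y \in s -> sm@_y.2 = g@_y.2.
  move=> y yin; have [_ _ e1] := el y yin; rewrite coef_sum (bigD1_seq y) //= mcoeffZ e1 mulr1.
  rewrite big1_seq ?addr0 // => x /andP[xny xin]; rewrite mcoeffZ.
  rewrite (cross y x yin xin) ?mulr0 //; apply: contra xny => /eqP e.
  by apply/eqP; apply: inj => //; rewrite e.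
have sm_span : forall hs, (forall x, x \in s -> in_span hs x.1) -> in_span hs sm.
  by move=> hs h; apply: span_sum_seq => x xin; apply: spanZ; apply: h.
have gs_sub : forall x, x \in map fst s -> in_span (g :: map fst s) x.
  by move=> x xin; apply: span_mem; rewrite in_cons xin orbT.
set g' := g - sm.
have g'0 : forall y, y \in s -> g'@_y.2 = 0.
  by move=> y yin; rewrite mcoeffB smcoef // subrr.
case: (eqVneq g' 0) => [g'z|g'nz].
  exists s; split; first by split.
  split; last by [].
  move=> x; rewrite in_cons => /orP[/eqP->|xin]; last exact: span_mem.
  have -> : g = sm by apply/eqP; rewrite -subr_eq0 -/g' g'z.
  by apply: sm_span => y yin; apply: span_fst.
have [p0 p0in p0min] : exists2 t, t \in msupp g' & forall t', t' \in msupp g' -> t' != t -> bef t t'.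
  by apply: min_exists; rewrite msupp_eq0.
set c := g'@_p0.
have cnz : c != 0 by rewrite -mcoeff_msupp.
set gn := c^-1 *: g'.
have gnp0 : gn@_p0 = 1 by rewrite mcoeffZ mulVf.
have gnsupp : forall t, (t \in msupp gn) = (t \in msupp g').
  by move=> t; apply: perm_mem; apply: msuppZ; rewrite invr_eq0.
have gnpiv : forall y, y \in s -> gn@_y.2 = 0.
  by move=> y yin; rewrite mcoeffZ g'0 // mulr0.
have p0new : forall y, y \in s -> y.2 != p0.
  by move=> y yin; apply/eqP => e; move: (gnpiv y yin); rewrite e gnp0; apply/eqP; rewrite oner_eq0.
pose upd (x : poly * mon) := (x.1 - x.1@_p0 *: gn, x.2).
exists ((gn, p0) :: map upd s).
have mem' : forall u, u \in (gn, p0) :: map upd s -> u = (gn, p0) \/ exists2 x, x \in s & u = upd x.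
  move=> u; rewrite in_cons => /orP[/eqP->|/mapP[x xin ->]]; [by left|by right; exists x].
have updel : forall x, x \in s -> [/\ (upd x).1 != 0, ispiv (upd x).1 (upd x).2 & (upd x).1@_(upd x).2 = 1].
  move=> x xin; have [h1 [h2a h2b] h3] := el x xin.
  have c1 : (upd x).1@_(upd x).2 = 1 by rewrite /= mcoeffB mcoeffZ gnpiv // mulr0 subr0.
  have inn : x.2 \in msupp (upd x).1 by rewrite mcoeff_msupp c1 oner_eq0.
  split => //.
  - by apply: contraTneq inn => ->; rewrite msupp0.
  - split => // t' t'in t'ne.
    case: (eqVneq (x.1@_p0) 0) => [a0|anz].
      by move: t'in; rewrite /= a0 scale0r subr0 => t'in; apply: h2b.
    move: t'in => /msuppB_le; rewrite mem_cat => /orP[t'in|/msuppZ_le].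
      exact: h2b.
    rewrite gnsupp => t'in.
    have bp : bef x.2 p0.
      apply: h2b; first by rewrite mcoeff_msupp.
      by rewrite eq_sym p0new.
    case: (eqVneq t' p0) => [->//|/(p0min _ t'in)]; exact: bef_trans bp.
split; last split.
- split.
  + rewrite /= map_inj_in_uniq ?us ?andbT.
      apply/mapP => -[x xin [_ e]]; by move: (p0new x xin); rewrite -e eqxx.
    by move=> x y xin yin [_ e]; apply: inj.
  + move=> u v /mem' [->|[x xin ->]] /mem' [->|[y yin ->]] //= e.
    * by move: (p0new y yin); rewrite e eqxx.
    * by move: (p0new x xin); rewrite e eqxx.
    * by rewrite (inj x y xin yin e).
  + move=> u /mem' [->|[x xin ->]]; last exact: updel.
    split => //=.
    * by apply: contraTneq p0in => e; rewrite -gnsupp e msupp0.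
    * by split; rewrite ?gnsupp // => t'; rewrite gnsupp; apply: p0min.
  + move=> u v /mem' [->|[x xin ->]] /mem' [->|[y yin ->]] //=.
    * by rewrite eqxx.
    * by move=> _; rewrite mcoeffB mcoeffZ gnp0 mulr1 subrr.
    * by move=> _; rewrite gnpiv.
    * by move=> ne; rewrite mcoeffB mcoeffZ gnpiv // mulr0 subr0 (cross x y).
- have gn_in : in_span (map fst ((gn, p0) :: map upd s)) gn by apply: span_mem; rewrite in_cons eqxx.
  have x_in : forall x, x \in s -> in_span (map fst ((gn, p0) :: map upd s)) x.1.
    move=> x xin; have -> : x.1 = (upd x).1 + x.1@_p0 *: gn by rewrite /= subrK.
    apply: spanD; last exact: spanZ.
    apply: span_mem; rewrite /= in_cons; apply/orP; right; apply/mapP; exists (upd x) => //; exact: map_f.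
  move=> x; rewrite in_cons => /orP[/eqP->|/mapP[y yin ->]]; last exact: x_in.
  have -> : g = c *: gn + sm by rewrite /gn scalerA divff // scale1r subrK.
  by apply: spanD; [exact: spanZ | exact: sm_span].
- have gnsp : in_span (g :: map fst s) gn.
    apply: spanZ; apply: spanB; first by apply: span_mem; rewrite in_cons eqxx.
    by apply: sm_span => y yin; apply: gs_sub; apply: map_f.
  move=> x; rewrite /= in_cons => /orP[/eqP->//|/mapP[u /mapP[y yin ->] ->]].
  rewrite /=; apply: spanB; last exact: spanZ.
  by apply: gs_sub; apply: map_f.
Qed.

Lemma same_span_trans (a b c : seq poly) : same_span a b -> same_span b c -> same_span a c.
Proof. by move=> [h1 h2] [h3 h4]; split => f hf; auto. Qed.

Lemma same_span_perm (a b : seq poly) : perm_eq a b -> same_span a b.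
Proof.
move=> p; apply: same_span_mem => x xin; apply: span_mem;
by rewrite ?(perm_mem p) // -(perm_mem p).
Qed.

Lemma pinv_exists (gs : seq poly) : exists s, pinv s /\ same_span gs (map fst s).
Proof.
elim: gs => [|g gs [s [ps [sp1 sp2]]]].
  exists [::]; split; first by split.
  by split => f hf.
have [s' [ps' [h1 h2]]] := pinv_cons g ps.
exists s'; split => //; split.
- apply: span_sub => x; rewrite in_cons => /orP[/eqP->|xin].
    by apply: h1; rewrite in_cons eqxx.
  apply: (span_sub (gs := map fst s)); first by move=> y yin; apply: h1; rewrite in_cons yin orbT.
  by apply: sp1; apply: span_mem.
- apply: span_sub => x /h2; apply: span_sub => y; rewrite in_cons => /orP[/eqP->|yin].
    by apply: span_mem; rewrite in_cons eqxx.
  apply: (span_sub (gs := gs)); first by move=> z zin; apply: span_mem; rewrite in_cons zin orbT.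
  by apply: sp2; apply: span_mem.
Qed.

Lemma rref_exists (gs : seq poly) : exists hs, same_span gs hs /\
  exists piv : seq mon,
    [/\ size piv = size hs,
        forall j, (j < size hs)%N -> hs`_j != 0 /\
           ((nth 0%MM piv j) \in msupp hs`_j /\
            forall t', t' \in msupp hs`_j -> t' != nth 0%MM piv j -> bef (nth 0%MM piv j) t'),
        forall j, (j < size hs)%N -> hs`_j@_(nth 0%MM piv j) = 1,
        forall j k, (j < k < size hs)%N -> bef (nth 0%MM piv j) (nth 0%MM piv k)
      & forall j k, (j < size hs)%N -> (k < size hs)%N -> j != k ->
                    hs`_k@_(nth 0%MM piv j) = 0].
Proof.
have [s [ps sp]] := pinv_exists gs.
pose le (x y : poly * mon) := (x.2 == y.2) || bef x.2 y.2.
have le_tot : total le.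
  move=> x y; rewrite /le; case: (eqVneq x.2 y.2) => [e|ne] //=.
  exact: bef_tot.
have le_tr : ssrbool.transitive le.
  move=> y x z; rewrite /le => /orP[/eqP->//|h1] /orP[/eqP<-|h2]; first by rewrite h1 orbT.
  by rewrite (bef_trans h1 h2) orbT.
set s2 := sort le s.
have pe : perm_eq s2 s by rewrite perm_sort.
have srt : sorted le s2 by apply: sort_sorted.
have [us inj el cross] := ps.
have mem2 : forall x, (x \in s2) = (x \in s) by move=> x; apply: perm_mem.
have us2 : uniq s2 by rewrite (perm_uniq pe).
have inj2 : {in s2 &, forall x y, x.2 = y.2 -> x = y}.
  by move=> x y; rewrite !mem2; apply: inj.
exists (map fst s2); split.
  apply: (same_span_trans sp); apply: same_span_perm; rewrite perm_sym.
  by apply: perm_map.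
exists (map snd s2).
pose x0 := (0 : poly, 0%MM : mon).
have nthf : forall j, (j < size s2)%N -> (map fst s2)`_j = (nth x0 s2 j).1.
  by move=> j jl; rewrite (nth_map x0).
have nths : forall j, (j < size s2)%N -> nth 0%MM (map snd s2) j = (nth x0 s2 j).2.
  by move=> j jl; rewrite (nth_map x0).
have nthin : forall j, (j < size s2)%N -> nth x0 s2 j \in s.
  by move=> j jl; rewrite -mem2 mem_nth.
rewrite !size_map; split => //.
- move=> j jl; rewrite nthf // nths //; have [h1 [h2 h3] _] := el _ (nthin j jl).
  by split.
- by move=> j jl; rewrite nthf // nths //; have [_ _ ->] := el _ (nthin j jl).
- move=> j k /andP[jk kl]; have jl := ltn_trans jk kl.
  rewrite !nths //.
  have := sorted_ltn_nth le_tr x0 srt; rewrite /prop_in2 => h.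
  have := h j k jl kl jk; rewrite /le => /orP[/eqP e|//].
  have := inj2 _ _ (mem_nth x0 jl) (mem_nth x0 kl) e.
  by move/eqP; rewrite nth_uniq // => /eqP jke; rewrite jke ltnn in jk.
- move=> j k jl kl jk; rewrite nthf // nths //; apply: cross; try exact: nthin.
  apply: contra jk => /eqP e.
  by rewrite -(nth_uniq x0 jl kl us2); apply/eqP; apply: inj2 => //; apply: mem_nth.
Qed.

End RREF.
Section Exist.
Variables (K : fieldType) (n : nat).
Notation mon := 'X_{1..n}.
Notation poly := {mpoly K[n]}.

Lemma LT_basis_exists (tau : rel mon) (H : seq poly) :
  term_ordering tau -> exists hs, LT_basis tau H hs.
Proof.
move=> [irr tr tot _ _].
have [hs [sp [piv [sz hpiv h1 hord hz]]]] :=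
  @rref_exists K n (fun a b => tau b a) (fun a b c h1 h2 => tr _ _ _ h2 h1)
    (fun a b ne => let t := tot a b ne in ltac:(by rewrite orbC)) H.
exists hs; split => //.
- by apply/allP => h /(nthP 0) [j jl <-]; have [] := hpiv j jl.
- move=> c hc j; have jl := ltn_ord j.
  have := congr1 (mcoeff (nth 0%MM piv j)) hc; rewrite mcoeff0 coef_sum.
  rewrite (bigD1 j) //= mcoeffZ h1 // mulr1 big1 ?addr0 // => k kj.
  by rewrite mcoeffZ hz ?mulr0 // eq_sym.
- exists piv; split => //.
  + apply/(uniqP 0%MM) => i j; rewrite !inE sz => il jl e.
    case: (ltngtP i j) => // ij.
    * by have := hord i j; rewrite ij jl e => /(_ isT); rewrite (negbTE (irr _)).
    * by have := hord j i; rewrite ij il e => /(_ isT); rewrite (negbTE (irr _)).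
  + move=> j jl; have [_ [hin hmin]] := hpiv j jl; split => //.
Qed.

Lemma LI_exists (Z : seq 'I_n) (gs : seq poly) : exists hs, LI Z gs hs.
Proof.
have := @rref_exists K n (colbefore Z) (@colbefore_trans n Z)
   (@colbefore_total n Z) gs.
by [].
Qed.

End Exist.
Section Restrict.
Variables (K : fieldType) (n : nat).
Notation mon := 'X_{1..n}.
Notation poly := {mpoly K[n]}.

Lemma supp_in_sumX (P : mon -> Prop) (Q : pred mon) (r : seq mon) (f : poly) :
  (forall m, m \in r -> Q m -> P m) ->
  supp_in P (\sum_(m <- r | Q m) f@_m *: 'X_[m]).
Proof.
move=> h; rewrite big_seq_cond; elim/big_ind: _.
- exact: supp_in0.
- exact: supp_inD.
- move=> m /andP[mr qm]; apply: supp_inZ => t; rewrite msuppX mem_seq1 => /eqP ->.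
  exact: h.
Qed.

Lemma restrict_supp (Z : seq 'I_n) (f : poly) : supp_in (fun m => m \in msupp f) (restrictZ Z f).
Proof. by apply: supp_in_sumX => m. Qed.

Lemma restrict_diff (Z : seq 'I_n) (f : poly) :
  supp_in (fun m => m \in msupp f /\ ~~ has (fun z => 0 < m z)%N Z) (f - restrictZ Z f).
Proof.
have e : f - restrictZ Z f = \sum_(m <- msupp f | ~~ has (fun z => 0 < m z)%N Z) f@_m *: 'X_[m].
  rewrite {1}[f]mpolyE (bigID (fun m : mon => has (fun z => 0 < m z)%N Z)) /=.
  by rewrite /restrictZ addrC addrK.
by rewrite e; apply: supp_in_sumX => m mi hm; split.
Qed.

End Restrict.

Section Main.
Variables (K : fieldType) (n : nat).
Notation mon := 'X_{1..n}.
Notation poly := {mpoly K[n]}.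
Variables (gs : seq poly) (Z0 : seq 'I_n) (delta : nat).
Hypothesis hdel : forall g, g \in gs -> forall m, m \in msupp g -> (mdeg m <= delta)%N.

Definition nz (Z : seq 'I_n) (m : mon) := forall k, k \in Z -> m k = 0%N.

Definition good (Z : seq 'I_n) (w : 'I_n -> nat) (B : nat) (g : poly) :=
  exists F, in_ideal gs F /\ supp_in (fun m => nz Z m /\ (wdeg w m <= B)%N) (F - g).

Definition doneP (Z : seq 'I_n) (w : 'I_n -> nat) (z : 'I_n) :=
  exists F, in_ideal gs F /\ supp_in (fun m => nz Z m /\ (wdeg w m < w z)%N) (F - 'X_z).

Definition lowdeg (g : poly) := supp_in (fun m => (mdeg m <= delta)%N) g.

Definition Inv (s : ocstate K n) : Prop :=
  match s with
  | OCLoop Z L w d => exists dp, [/\ d = (2 * delta * dp + 1)%N, forall k, (w k <= dp)%N,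
        forall g, g \in L -> lowdeg g /\ good Z w (delta * dp) g
      & forall z, z \in Z0 -> z \notin Z -> doneP Z w z]
  | OCDone (Some W) => forall z, z \in Z0 -> doneP [::] W z
  | OCDone None => True
  end.

Lemma good_span Z w B (L : seq poly) f :
  (forall x, x \in L -> lowdeg x /\ good Z w B x) -> in_span L f -> lowdeg f /\ good Z w B f.
Proof.
move=> h; apply: (@span_ind _ _ (fun f => lowdeg f /\ good Z w B f)) => //.
- split; first exact: supp_in0.
  by exists 0; split; [exact: ideal0 | rewrite subrr; exact: supp_in0].
- move=> a b [la [Fa [ia sa]]] [lb [Fb [ib sb]]]; split; first exact: supp_inD.
  exists (Fa + Fb); split; first exact: idealD.
  by rewrite opprD addrACA; apply: supp_inD.
- move=> c a [la [Fa [ia sa]]]; split; first exact: supp_inZ.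
  exists (c *: Fa); split; first exact: idealZ.
  by rewrite -scalerBr; apply: supp_inZ.
Qed.

Lemma good_mono Z w B B' g : (B <= B')%N -> good Z w B g -> good Z w B' g.
Proof.
move=> le [F [iF sF]]; exists F; split => //; apply: supp_in_imp sF => m [h1 h2].
by split => //; apply: leq_trans le.
Qed.

Lemma good_H Z L w dp x :
  (forall k, (w k <= dp)%N) ->
  (forall g, g \in L -> good Z w (delta * dp) g) ->
  x \in Hset Z L -> good Z w (delta * dp + dp) x.
Proof.
move=> hw hL /allpairsP [[i g] /= [iin gin ->]].
have [F [iF sF]] := hL g gin.
exists ('X_i * F); split; first exact: idealM.
rewrite -mulrBr; apply: supp_in_imp (supp_inMX (i := i) sF) => m [m' [nzm' wm'] ->].
move: iin; rewrite mem_filter => /andP[iZ _].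
split.
- move=> k kZ; rewrite mnmDE mnm1E nzm' // addn0.
  by case: eqP => // e; move: iZ; rewrite e kZ.
- by rewrite wdegD wdeg1 addnC leq_add.
Qed.

Lemma nz_sub (Z Z' : seq 'I_n) m : {subset Z' <= Z} -> nz Z m -> nz Z' m.
Proof. by move=> s h k /s /h. Qed.

Lemma stepInv s1 s2 : oc_step delta s1 s2 -> Inv s1 -> Inv s2.
Proof.
case=> Z L w d tau hs L' _ _ [_ _ [_ spH] _] [[_ spL] _] [dp [hd hw hL hdone]].
set Bnd := (delta * dp + dp)%N.
have hhs : forall h, h \in hs -> good Z w Bnd h.
  move=> h hin.
  have : in_span (Hset Z L) h by apply: spH; apply: span_mem.
  apply: span_ind.
  - by exists 0; split; [exact: ideal0 | rewrite subrr; exact: supp_in0].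
  - move=> a b [Fa [ia sa]] [Fb [ib sb]].
    exists (Fa + Fb); split; first exact: idealD.
    by rewrite opprD addrACA; apply: supp_inD.
  - move=> c a [Fa [ia sa]].
    exists (c *: Fa); split; first exact: idealZ.
    by rewrite -scalerBr; apply: supp_inZ.
  - move=> u uin; apply: good_H uin => // g gin; by have [] := hL g gin.
have hcat : forall x, x \in L ++ [seq h <- hs | (pdeg h <= delta)%N] -> lowdeg x /\ good Z w Bnd x.
  move=> x; rewrite mem_cat => /orP[xin|].
    have [l1 g1] := hL x xin; split => //; apply: good_mono g1; exact: leq_addr.
  rewrite mem_filter => /andP[pd xin]; split; last exact: hhs.
  move=> m min; apply: leq_trans pd; rewrite /pdeg.
  exact: (@leq_bigmax_seq _ _ xpredT mdeg m min).
have hL' : forall g, g \in L' -> lowdeg g /\ good Z w Bnd g.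
  by move=> g gin; apply: (good_span hcat); apply: spL; apply: span_mem.
rewrite /oc_after.
set Zt := [seq z <- Z | 'X_z \in L'].
set Z' := [seq z <- Z | z \notin Zt].
set w' := fun k => if k \in Zt then d else w k.
case: eqP => [//|Ztn].
have ZtZ : {subset Zt <= Z} by move=> z; rewrite mem_filter => /andP[].
have Z'Z : {subset Z' <= Z} by move=> z; rewrite mem_filter => /andP[].
have del1 : (1 <= delta)%N.
  case E : Zt Ztn => [//|z Zt2] _.
  have : z \in Zt by rewrite E mem_head.
  rewrite mem_filter => /andP[/hL' [ld _] _].
  by have := ld U_(z)%MM; rewrite msuppX mem_seq1 eqxx mdeg1 => /(_ isT).
have Bd : (Bnd < d)%N by rewrite hd /Bnd; nia.
have Bd2 : (Bnd <= delta * d)%N by rewrite hd /Bnd; nia.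
have wdeq : forall m, nz Z m -> wdeg w' m = wdeg w m.
  move=> m nzm; apply: wdeg_eq => k mk; rewrite /w'; case: ifP => // /ZtZ /nzm.
  by move/eqP: mk.
have newdone : forall z, z \in Z0 -> z \notin Z' -> doneP Z' w' z.
  move=> z z0 zZ'.
  case: (boolP (z \in Z)) => zZ.
  - have zt : z \in Zt by move: zZ'; rewrite mem_filter zZ andbT negbK.
    have [_ [F [iF sF]]] : lowdeg 'X_z /\ good Z w Bnd 'X_z.
      by apply: hL'; move: zt; rewrite mem_filter => /andP[].
    exists F; split => //; apply: supp_in_imp sF => m [nzm wm]; split.
      exact: nz_sub Z'Z nzm.
    by rewrite wdeq // /w' zt; apply: leq_ltn_trans Bd.
  - have [F [iF sF]] := hdone z z0 zZ.
    exists F; split => //; apply: supp_in_imp sF => m [nzm wm]; split.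
      exact: nz_sub Z'Z nzm.
    rewrite wdeq // /w'; case: ifP => // /ZtZ zZ2; by rewrite zZ2 in zZ.
case: eqP => [Z'0|Z'n].
  by move=> z z0; rewrite -Z'0; apply: newdone => //; rewrite Z'0.
exists d; split => //.
- move=> k; rewrite /w'; case: ifP => // _; apply: leq_trans (hw k) _; rewrite hd; nia.
- move=> g'' /mapP [g gin ->].
  have [ldg [F [iF sF]]] := hL' g gin.
  split; first by move=> m /restrict_supp /ldg.
  exists F; split => //.
  have -> : F - restrictZ Z' g = (F - g) + (g - restrictZ Z' g) by rewrite addrA subrK.
  apply: supp_inD.
  + apply: supp_in_imp sF => m [nzm wm]; split; first exact: nz_sub Z'Z nzm.
    by rewrite wdeq //; apply: leq_trans Bd2.
  + apply: supp_in_imp (restrict_diff (Z:=Z') (f:=g)) => m [min hm]; split.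
      move=> k kZ; apply/eqP; rewrite -leqn0 leqNgt; apply: contra hm => h.
      by apply/hasP; exists k.
    apply: (@leq_trans (d * mdeg m)).
      apply: wdeg_le => k; rewrite /w'; case: ifP => // _.
      apply: leq_trans (hw k) _; rewrite hd; nia.
    by rewrite mulnC leq_mul2r (ldg m min) orbT.
Qed.

Lemma Inv_rt x y : clos_refl_trans _ (oc_step delta) x y -> Inv x -> Inv y.
Proof.
elim => //; first by move=> a b /stepInv.
by move=> a b c _ h1 _ h2 /h1 /h2.
Qed.

Lemma Inv_init : Inv (oc_init gs Z0).
Proof.
rewrite /oc_init; case: ifP => // _.
exists 0%N; split.
- by rewrite muln0.
- by [].
- move=> g' /mapP [g gin ->]; split.
    by move=> m /restrict_supp; apply: hdel.
  exists g; split; first exact: ideal_mem.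
  apply: supp_in_imp (restrict_diff (Z:=Z0) (f:=g)) => m [min hm]; split.
    move=> k kZ; apply/eqP; rewrite -leqn0 leqNgt; apply: contra hm => h.
    by apply/hasP; exists k.
  by rewrite /wdeg big1 // => i _; rewrite mul0n.
- by move=> z ->.
Qed.

End Main.
Section Final.
Variables (K : fieldType) (n : nat).

Lemma final_part (gs : seq {mpoly K[n]}) (Z : seq 'I_n) (W : 'I_n -> nat) :
  (forall z, z \in Z -> doneP gs [::] W z) ->
  exists f : 'I_(size Z) -> {mpoly K[n]},
    [/\ forall i, in_ideal gs (f i),
        Z_separating f
      & forall lt : rel 'X_{1..n}, term_ordering lt -> W_compatible W lt ->
          forall i, is_LT lt (f i) (zterm i)].
Proof.
move=> hd.
have hF : forall i : 'I_(size Z), exists F : {mpoly K[n]}, in_ideal gs F /\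
   (forall lt : rel 'X_{1..n}, W_compatible W lt -> is_LT lt F (zterm i)).
  move=> i; set z := tnth (in_tuple Z) i.
  have [F [iF sF]] := hd z (mem_tnth i (in_tuple Z)).
  exists F; split => // lt Wc.
  have Unot : U_(z)%MM \notin msupp (F - 'X_z).
    by apply/negP => /sF [_]; rewrite wdeg1 ltnn.
  have c1 : F@_(U_(z)%MM) = 1.
    have := memN_msupp_eq0 Unot; rewrite mcoeffB mcoeffX eqxx => /eqP.
    by rewrite subr_eq0 => /eqP.
  split; first by rewrite /zterm -/z mcoeff_msupp c1 oner_eq0.
  move=> t' t'in t'ne; apply: Wc; rewrite /zterm -/z wdeg1.
  have : t' \in msupp (F - 'X_z).
    rewrite mcoeff_msupp mcoeffB mcoeffX.
    have -> : (U_(z)%MM == t') = false by apply/negbTE; rewrite eq_sym.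
    by rewrite subr0 -mcoeff_msupp.
  by move/sF => [].
pose f i := proj1_sig (constructive_indefinite_description _ (hF i)).
have fP : forall i, in_ideal gs (f i) /\ (forall lt, W_compatible W lt -> is_LT lt (f i) (zterm i)).
  by move=> i; rewrite /f; case: constructive_indefinite_description.
exists f; split.
- by move=> i; have [] := fP i.
- have [lt [tol Wc]] := W_order_exists W.
  by exists lt; split => // i; have [_ ] := fP i; apply.
- by move=> lt _ Wc i; have [_ ] := fP i; apply.
Qed.

End Final.

Theorem mainTheorem4 (K : fieldType) (n : nat) (gs : seq {mpoly K[n]})
    (Z : seq 'I_n) :
  (0 < size gs)%N ->
  all (fun g => g != 0) gs ->
  ~ in_ideal gs 1 ->
  uniq Z ->
  let delta := \max_(g <- gs) pdeg g in
  let s0 := oc_init gs Z in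
  [/\ (* termination: no infinite run of the repeat-loop *)
      Acc (fun y x => oc_step delta x y) s0,
      (* no run gets stuck: every reachable state has returned or can proceed *)
      (forall s, oc_reach delta s0 s ->
         (exists res, s = OCDone res) \/ exists s', oc_step delta s s')
    & (* correctness when a tuple W is returned *)
      forall W : 'I_n -> nat, oc_reach delta s0 (OCDone (Some W)) ->
        exists f : 'I_(size Z) -> {mpoly K[n]},
          [/\ forall i, in_ideal gs (f i),
              Z_separating f
            & forall lt : rel 'X_{1..n}, term_ordering lt -> W_compatible W lt ->
                forall i, is_LT lt (f i) (zterm i)]].
Proof.
move=> _ _ _ _ delta s0.
have hdel : forall g, g \in gs -> forall m, m \in msupp g -> (mdeg m <= delta)%N.
  move=> g gin m min; apply: (@leq_trans (pdeg g)).
    exact: (@leq_bigmax_seq _ _ xpredT mdeg m min).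
  rewrite /delta; apply: leq_bigmax_seq => //.
split.
- pose ms (s : ocstate K n) := match s with OCLoop Z _ _ _ => (size Z).+1 | OCDone _ => 0%N end.
  have dec : forall x y, oc_step delta x y -> (ms y < ms x)%N.
    move=> x y; case=> Z1 L w d tau hs L' _ _ _ _; rewrite /oc_after.
    case: eqP => // Ztn; case: eqP => // Z'n /=; rewrite ltnS size_filter.
    set Zt := [seq z <- Z1 | 'X_z \in L'].
    have [z zt] : exists z, z \in Zt.
      by case E : Zt Ztn => [//|z Zt2] _; exists z; rewrite ?E mem_head.
    have zZ : z \in Z1 by move: zt; rewrite mem_filter => /andP[].
    rewrite -[size Z1](count_predC (fun z => z \notin Zt)).
    rewrite -{1}[count _ _]addn0 ltn_add2l -has_count.
    by apply/hasP; exists z => //=; rewrite zt.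
  suff : forall k x, (ms x < k)%N -> Acc (fun y x => oc_step delta x y) x.
    by apply; apply: ltnSn.
  elim => [//|k IH] x hx; constructor => y /dec h; apply: IH; lia.
- move=> s _; case: s => [Z1 L w d|res]; last by left; exists res.
  right.
  have [hs hLT] := @LT_basis_exists K n (@tau0 n) (Hset Z1 L) (@tau0_to n).
  have [L' hLI] := @LI_exists K n Z1 (L ++ [seq h <- hs | (pdeg h <= delta)%N]).
  exists (oc_after delta Z1 L' w d).
  apply: OCStep hLT hLI; [exact: tau0_to | exact: tau0_deg].
- move=> W hr; apply: final_part.
  have hi := @Inv_init K n gs Z delta hdel.
  exact: (@Inv_rt K n gs Z delta _ _ hr hi).
Qed.
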